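(* Let $f$ be a rational function over $k$ of degree $d\ge 2$ and let $\Gamma$ be a vertex set in $\mathbf{P}^1_{\mathrm{Berk}}$. Then the set $\mathcal J(\Gamma)$ is countable.
   Context: $k$ is an algebraically closed field complete with respect to a nontrivial non-Archimedean absolute value; $\mathbf{P}^1_{\mathrm{Berk}}$ is the Berkovich projective line over $k$. A vertex set is a finite nonempty set $\Gamma$ of type II points; the connected components of $\mathbf{P}^1_{\mathrm{Berk}}\smallsetminus\Gamma$ are called $\Gamma$-domains. A $\Gamma$-domain $U$ is an $F$-domain if $f^n(U)\cap\Gamma=\varnothing$ for all $n\ge1$, and a $J$-domain otherwise. $\mathcal J(\Gamma)$ is the set consisting of all $J$-domains together with the elements (singletons) of $\Gamma$. *)

(* Defs.v *)
From HB Require Import structures.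
From mathcomp Require Import all_boot all_order all_algebra.
From mathcomp Require Import boolp classical_sets cardinality reals.
Set Implicit Arguments. Unset Strict Implicit. Unset Printing Implicit Defensive.
Import Order.TTheory GRing.Theory Num.Theory.
Local Open Scope ring_scope.
Local Open Scope classical_set_scope.

Section Berk.
Variables (R : realType) (k : closedFieldType) (absv : k -> R).

Definition complete_nonarch_abs : Prop :=
  [/\ (forall x, 0 <= absv x),
      (forall x, absv x = 0 <-> x = 0),
      (forall x y, absv (x * y) = absv x * absv y),
      (forall x y, absv (x + y) <= Order.max (absv x) (absv y)) /\
      (exists c, absv c != 0 /\ absv c != 1) &
      (forall u : nat -> k,
        (forall e, 0 < e -> exists N, forall m n, (N <= m)%N -> (N <= n)%N ->
            absv (u m - u n) < e) ->
        exists l, forall e, 0 < e -> exists N, forall n, (N <= n)%N ->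
            absv (u n - l) < e)].

(** Points of the Berkovich affine line: multiplicative seminorms on k[T]
    extending the absolute value of k. *)
Definition seminormA1 (s : {poly k} -> R) : Prop :=
  [/\ (forall g, 0 <= s g),
      (forall g h, s (g * h) = s g * s h),
      (forall g h, s (g + h) <= s g + s h) &
      (forall c, s c%:P = absv c)].

(** Raw points of P^1_Berk: [Some s] for s in A^1_Berk, [None] for infinity. *)
Definition pt := option ({poly k} -> R).

Definition inP1 (x : pt) : Prop :=
  match x with None => True | Some s => seminormA1 s end.

(** Topology of A^1_Berk: the weakest topology making all s |-> s g continuous
    (generated by the subbasic sets {a < s g < b}). *)
Definition basicA (b : {poly k} * R * R) (s : {poly k} -> R) : bool :=
  b.1.2 < s b.1.1 < b.2.

Definition openA (U : set ({poly k} -> R)) : Prop :=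
  U `<=` seminormA1 /\
  forall s, U s -> exists l : seq ({poly k} * R * R),
    all (basicA^~ s) l /\
    (forall t, seminormA1 t -> all (basicA^~ t) l -> U t).

Definition compactA (K : set ({poly k} -> R)) : Prop :=
  K `<=` seminormA1 /\
  forall F : set (set ({poly k} -> R)),
    (forall V, F V -> openA V) ->
    (forall s, K s -> exists V, F V /\ V s) ->
    exists n (G : 'I_n -> set ({poly k} -> R)),
      (forall i, F (G i)) /\ (forall s, K s -> exists i, G i s).

(** Topology of P^1_Berk: one-point compactification of A^1_Berk. *)
Definition openP1 (U : set pt) : Prop :=
  U `<=` inP1 /\ openA [set s | U (Some s)] /\
  (U None -> compactA [set s | seminormA1 s /\ ~ U (Some s)]).

Definition connectedP1 (S : set pt) : Prop :=
  ~ exists U V, [/\ openP1 U /\ openP1 V, S `<=` U `|` V,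
                    S `&` U !=set0, S `&` V !=set0 & S `&` U `&` V = set0].

Definition component (A : set pt) (x : pt) : set pt :=
  [set y | exists C, [/\ C `<=` A, connectedP1 C, C x & C y]].

Definition typeI (a : k) : pt := Some (fun g => absv g.[a]).

Definition zeta (a : k) (r : R) : {poly k} -> R :=
  fun g => sup [set absv g.[z] | z in [set z | absv (z - a) <= r]].

Definition typeII (x : pt) : Prop :=
  exists a c, c != 0 /\ x = Some (zeta a (absv c)).

Definition vertex_set (G : set pt) : Prop :=
  [/\ finite_set G, G !=set0 & G `<=` typeII].

Record ratfun := RatFun {
  numer : {poly k};
  denom : {poly k};
  numer_denom_coprime : coprimep numer denom;
  denom_neq0 : denom != 0 }.

Definition ratdeg (f : ratfun) : nat :=
  (maxn (size (numer f)) (size (denom f))).-1.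

(** Numerator of g o (P/Q) times Q^(deg g):  sum_i g_i P^i Q^(deg g - i). *)
Definition homog (P Q g : {poly k}) : {poly k} :=
  \sum_(i < size g) g`_i *: (P ^+ i * Q ^+ ((size g).-1 - i)).

(** Action of f on P^1_Berk:  [g]_{f(x)} = [g o f]_x. *)
Definition ratact (f : ratfun) (x : pt) : pt :=
  let P := numer f in let Q := denom f in
  match x with
  | Some s => if s Q == 0 then None
              else Some (fun g => s (homog P Q g) / (s Q) ^+ (size g).-1)
  | None => if (size Q < size P)%N then None
            else typeI (if size P == size Q then lead_coef P / lead_coef Q else 0)
  end.

Definition Gdomain (G U : set pt) : Prop :=
  exists x, [/\ inP1 x, ~ G x & U = component [set y | inP1 y /\ ~ G y] x].

Definition Fdomain (f : ratfun) (G U : set pt) : Prop :=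
  Gdomain G U /\
  forall n, (0 < n)%N -> forall y, U y -> ~ G (iter n (ratact f) y).

Definition Jdomain (f : ratfun) (G U : set pt) : Prop :=
  Gdomain G U /\ ~ Fdomain f G U.

Definition Jset (f : ratfun) (G : set pt) : set (set pt) :=
  [set U | Jdomain f G U \/ exists g, G g /\ U = [set g]].

End Berk.

(* Main.v *)
Require Import Defs.
From mathcomp Require Import all_boot all_order all_algebra.
From mathcomp Require Import boolp classical_sets cardinality reals.
From HB Require Import structures.
From mathcomp Require Import finmap.
From mathcomp Require Import ring lra zify.

Module Helpers.
Set Implicit Arguments. Unset Strict Implicit. Unset Printing Implicit Defensive.
Import Order.TTheory GRing.Theory Num.Theory.
Local Open Scope ring_scope.
Local Open Scope classical_set_scope.

Section RealFacts.
Variable R : realType.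

Definition ev (P : nat -> Prop) := exists N, forall n, (N <= n)%N -> P n.

Lemma ev_and P Q : ev P -> ev Q -> ev (fun n => P n /\ Q n).
Proof.
move=> [N1 H1] [N2 H2]; exists (maxn N1 N2) => n Hn; split.
  by apply: H1; apply: leq_trans Hn; apply: leq_maxl.
by apply: H2; apply: leq_trans Hn; apply: leq_maxr.
Qed.

Lemma ev_seq (T : eqType) (P : T -> nat -> Prop) (J : seq T) :
  (forall j, j \in J -> ev (P j)) -> ev (fun n => forall j, j \in J -> P j n).
Proof.
elim: J => [|a J IH] H; first by exists 0%N.
have HJ : forall j, j \in J -> ev (P j).
  by move=> j jJ; apply: H; rewrite inE jJ orbT.
have [N HN] := ev_and (H a (mem_head _ _)) (IH HJ).
exists N => n /HN [Ha HJn] j; rewrite inE => /orP [/eqP->|] //.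
exact: HJn.
Qed.

Lemma ev_ge (K : nat) : ev (fun n => (K <= n)%N).
Proof. by exists K. Qed.

Lemma ev_ex P : ev P -> exists n, P n.
Proof. by move=> [N H]; exists N; apply: H. Qed.

Lemma bernoulli (x : R) n : 1 <= x -> 1 + n%:R * (x - 1) <= x ^+ n.
Proof.
move=> x1; elim: n => [|n IH]; first by rewrite expr0 mul0r addr0.
rewrite exprS -natr1.
have h0 : 0 <= n%:R :> R by rewrite ler0n.
have h1 : 0 <= x * (x ^+ n - (1 + n%:R * (x - 1))) by apply: mulr_ge0; lra.
have h2 : 0 <= n%:R * ((x - 1) * (x - 1)) by apply: mulr_ge0 => //; nra.
nra.
Qed.

Lemma pow_big (x M : R) : 1 < x -> ev (fun n => M < x ^+ n).
Proof.
move=> x1.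
have hx : 0 < x - 1 by rewrite subr_gt0.
set B := `|M| / (x - 1).
have B0 : 0 <= B by rewrite divr_ge0 // ?normr_ge0 // ltW.
exists (Num.Def.archi_bound B) => n Hn.
have h1 : B < n%:R.
  apply: lt_le_trans (archi_boundP B0) _; by rewrite ler_nat.
have h2 := bernoulli n (ltW x1).
have h3 : `|M| < n%:R * (x - 1) by rewrite -ltr_pdivrMr.
have h4 : M <= `|M| by apply: ler_norm.
lra.
Qed.

Lemma pow_small (x e : R) : 0 <= x -> x < 1 -> 0 < e -> ev (fun n => x ^+ n < e).
Proof.
move=> x0 x1 e0; case: (eqVneq x 0) => [->|xn0].
  by exists 1%N => n Hn; rewrite expr0n; case: n Hn.
have xp : 0 < x by rewrite lt_def xn0.
have xi : 1 < x^-1 by rewrite invf_gt1.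
have [N HN] := pow_big (e^-1) xi.
exists N => n /HN h.
rewrite exprVn in h.
have hp : 0 < x ^+ n by rewrite exprn_gt0.
by rewrite -(@ltf_pV2 _ e (x ^+ n)) // posrE.
Qed.

Lemma pow_small_mul (x c d : R) : 0 <= x -> x < 1 -> 0 <= c -> 0 < d ->
  ev (fun n => x ^+ n * c < d).
Proof.
move=> x0 x1 c0 d0.
have e0 : 0 < d / (c + 1) by rewrite divr_gt0 // ltr_wpDl.
have [N HN] := pow_small x0 x1 e0; exists N => n /HN h.
have hp : 0 <= x ^+ n by rewrite exprn_ge0.
have c1 : 0 < c + 1 by lra.
rewrite ltr_pdivlMr // in h.
nra.
Qed.

End RealFacts.

Section Abs.
Variables (R : realType) (D : idomainType) (I : finType) (v : I -> D -> R).
Hypotheses (v_ge0 : forall i x, 0 <= v i x)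
  (vM : forall i x y, v i (x * y) = v i x * v i y)
  (vD : forall i x y, v i (x + y) <= v i x + v i y)
  (v00 : forall i, v i 0 = 0)
  (v0 : forall i x, v i x = 0 -> x = 0).

Lemma v_gt0 i x : x != 0 -> 0 < v i x.
Proof. by move=> xn0; rewrite lt_def v_ge0 andbT; apply/eqP => /v0 /eqP; apply/negP. Qed.

Lemma v1 i : v i 1 = 1.
Proof.
have h : v i 1 = v i 1 * v i 1 by rewrite -vM mulr1.
have p : 0 < v i 1 by apply: v_gt0; exact: oner_neq0.
have : v i 1 * (v i 1 - 1) = 0 by rewrite mulrBr mulr1 -h subrr.
by move/eqP; rewrite mulf_eq0 subr_eq0 gt_eqF //= => /eqP.
Qed.

Lemma vN1 i : v i (-1) = 1.
Proof.
have h : v i (-1) * v i (-1) = 1 by rewrite -vM mulrNN mulr1 v1.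
have p := v_ge0 i (-1).
have : (v i (-1) - 1) * (v i (-1) + 1) = 0 by rewrite mulrDr !mulrBl h; lra.
move/eqP; rewrite mulf_eq0 => /orP [|]; rewrite ?subr_eq0 => /eqP //; lra.
Qed.

Lemma vN i x : v i (- x) = v i x.
Proof. by rewrite -mulN1r vM vN1 mul1r. Qed.

Lemma vX i x n : v i (x ^+ n) = v i x ^+ n.
Proof. by elim: n => [|n IH]; rewrite ?expr0 ?v1 // !exprS vM IH. Qed.

Lemma vB i x y : v i x - v i y <= v i (x + y).
Proof.
have := vD i (x + y) (- y); rewrite addrK vN; lra.
Qed.

Lemma v_sum i (T : Type) (s : seq T) (P : pred T) (F : T -> D) :
  v i (\sum_(j <- s | P j) F j) <= \sum_(j <- s | P j) v i (F j).
Proof.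
elim/big_rec2: _ => [|j y1 y2 Pj h]; first by rewrite v00.
by apply: le_trans (vD _ _ _) _; rewrite lerD2l.
Qed.

Lemma v_prod i (T : Type) (s : seq T) (P : pred T) (F : T -> D) :
  v i (\prod_(j <- s | P j) F j) = \prod_(j <- s | P j) v i (F j).
Proof.
elim/big_rec2: _ => [|j y1 y2 Pj h]; first by rewrite v1.
by rewrite vM h.
Qed.

Definition Sep i j a b := [/\ b != 0, v i b < v i a & v j a < v j b].

Lemma ratio_helper (p q c d : R) n : 0 < q ->
  (p / q) ^+ n * c < d -> p ^+ n * c < d * q ^+ n.
Proof.
move=> q0; rewrite expr_div_n mulrAC ltr_pdivrMr //.
by rewrite exprn_gt0.
Qed.

Lemma approx (sep : forall i j, i != j -> exists a b, Sep i j a b) i j0 :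
  j0 != i -> forall J : seq I, i \notin J ->
  exists a b, [/\ b != 0, v i b < v i a & forall j, j \in J -> v j a < v j b].
Proof.
move=> j0i; elim => [|j J IH].
  have ij0 : i != j0 by rewrite eq_sym.
  have [a [b [bn0 h1 _]]] := sep _ _ ij0.
  by exists a, b; split.
rewrite inE negb_or => /andP [ij iJ].
have [a1 [a2 [a2n0 ai aJ]]] := IH iJ.
have [b1 [b2 [b2n0 bi bj]]] := sep _ _ ij.
have va2 := v_gt0 i a2n0.
have va1 : 0 < v i a1 by apply: le_lt_trans ai; apply: v_ge0.
have a1n0 : a1 != 0 by apply/eqP => E; move: va1; rewrite E v00 ltxx.
have vb2 l : 0 < v l b2 by apply: v_gt0.
have va2l l : 0 < v l a2 by apply: v_gt0.
have va1l l : 0 < v l a1 by apply: v_gt0.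
have vb1l l : 0 <= v l b1 by apply: v_ge0.
case: (ltgtP (v j a1) (v j a2)) => [lt|gt|eq].
- exists a1, a2; split => // l; rewrite inE => /orP [/eqP->//|]; exact: aJ.
-
  have evJ : ev (fun n => forall l, l \in J ->
      (v l a1 / v l a2) ^+ n * (v l b1 + v l b2) < v l b2).
    apply: ev_seq => l lJ; apply: pow_small_mul => //.
    + by apply: divr_ge0; apply: v_ge0.
    + by rewrite ltr_pdivrMr // mul1r; apply: aJ.
    + by apply: addr_ge0; apply: v_ge0.
  have evi : ev (fun n => (v i a2 / v i a1) ^+ n * v i b2 < v i b1 - v i b2).
    by apply: pow_small_mul; rewrite ?subr_gt0 ?divr_ge0 ?v_ge0 ?ltr_pdivrMr ?mul1r.
  have evj : ev (fun n => (v j a2 / v j a1) ^+ n * v j b2 < v j b2 - v j b1).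
    by apply: pow_small_mul; rewrite ?subr_gt0 ?divr_ge0 ?v_ge0 ?ltr_pdivrMr ?mul1r.
  have [n [[[n1 HJ] Hi] Hj]] := ev_ex (ev_and (ev_and (ev_and (ev_ge 1) evJ) evi) evj).
  have vAB : v i (a2 ^+ n) < v i (a1 ^+ n).
    by rewrite !vX ltrXn2r // -?lt0n // v_ge0.
  have ABn0 : a1 ^+ n + a2 ^+ n != 0.
    apply/eqP => E; have := vB i (a1 ^+ n) (a2 ^+ n).
    rewrite E v00; lra.
  exists (a1 ^+ n * b1), (b2 * (a1 ^+ n + a2 ^+ n)); split.
  + by rewrite mulf_neq0.
  + rewrite !vM; have := vD i (a1 ^+ n) (a2 ^+ n).
    have := ratio_helper (va1l i) Hi; rewrite -!vX.
    have := vb2 i; have := v_ge0 i (a1 ^+ n + a2 ^+ n); move: (vAB).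
    move: (v i (a1 ^+ n)) (v i (a2 ^+ n)) (v i (a1 ^+ n + a2 ^+ n)) => A B S.
    move=> hAB hS hb h1 h2; nra.
  + move=> l; rewrite inE => /orP [/eqP->|lJ].
      rewrite !vM; have := vB j (a1 ^+ n) (a2 ^+ n).
      have := ratio_helper (va1l j) Hj; rewrite -!vX.
      have := vb2 j; have := v_ge0 j (a2 ^+ n).
      move: (v j (a1 ^+ n)) (v j (a2 ^+ n)) (v j (a1 ^+ n + a2 ^+ n)) => A B S.
      move=> hB hb h1 h2; nra.
    rewrite !vM; have := vB l (a2 ^+ n) (a1 ^+ n); rewrite [a2 ^+ n + _]addrC.
    have := ratio_helper (va2l l) (HJ l lJ); rewrite -!vX.
    have := vb2 l; have := v_ge0 l (a1 ^+ n); have := vb1l l.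
    move: (v l (a1 ^+ n)) (v l (a2 ^+ n)) (v l (a1 ^+ n + a2 ^+ n)) => A B S.
    move=> hb1 hA hb h1 h2; nra.
-
  have evJ : ev (fun n => forall l, l \in J ->
      (v l a1 / v l a2) ^+ n * v l b1 < v l b2).
    apply: ev_seq => l lJ; apply: pow_small_mul => //.
    + by apply: divr_ge0; apply: v_ge0.
    + by rewrite ltr_pdivrMr // mul1r; apply: aJ.
  have [n HJ] := ev_ex evJ.
  exists (a1 ^+ n * b1), (a2 ^+ n * b2); split.
  + by rewrite mulf_neq0 // expf_neq0.
  + rewrite !vM !vX.
    have h1 : v i a2 ^+ n <= v i a1 ^+ n.
      by rewrite lerXn2r ?nnegrE ?v_ge0 // ltW.
    have h2 : 0 <= v i a2 ^+ n by rewrite exprn_ge0 // v_ge0.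
    have h3 : 0 < v i a1 ^+ n by rewrite exprn_gt0.
    have := vb2 i; nra.
  + move=> l; rewrite inE => /orP [/eqP->|lJ].
      rewrite !vM !vX eq.
      have h3 : 0 < v j a2 ^+ n by rewrite exprn_gt0.
      by rewrite ltr_pM2l.
    rewrite !vM !vX; have h := ratio_helper (va2l l) (HJ l lJ).
    by rewrite [v l a2 ^+ n * _]mulrC.
Qed.


Lemma indep_contra (sep : forall i j, i != j -> exists a b, Sep i j a b)
  (two : exists i j : I, i != j)
  (dep : forall num den : I -> D, (forall l, den l != 0) ->
     exists (c : I -> D) (e : D) (tau : I -> R),
       [/\ e != 0, exists l, 0 < tau l, forall i l, v i (c l) = tau l * v i e &
         \sum_l c l * num l * \prod_(j | j != l) den j = 0]) : False.
Proof.
have [i0 [j0 ij0]] := two.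
have other (i : I) : exists j, j != i.
  case: (eqVneq i i0) => [->|ii0]; first by exists j0; rewrite eq_sym.
  by exists i0; rewrite eq_sym.
have H (i : I) : exists ab : D * D, [/\ ab.2 != 0, v i ab.2 < v i ab.1 &
    forall j, j != i -> v j ab.1 < v j ab.2].
  have [j ji] := other i.
  have iJ : i \notin [seq j <- enum I | j != i] by rewrite mem_filter eqxx.
  have [a [b [bn0 h1 h2]]] := approx sep ji iJ.
  exists (a, b); split => // l li; apply: h2.
  by rewrite mem_filter li mem_enum.
have [f Hf] := choice H.
set m := #|I|.
have m0 : (0 < m)%N by apply/card_gt0P; exists i0.
have minv : 0 < (m%:R : R)^-1 by rewrite invr_gt0 ltr0n.
have EV : ev (fun n => (1 <= n)%N /\ forall i, i \in enum I ->
   forall l, l \in [seq j <- enum I | j != i] ->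
   (v i (f l).1 / v i (f l).2) ^+ n * 1 < (m%:R : R)^-1).
  apply: ev_and; first exact: ev_ge.
  apply: ev_seq => i _; apply: ev_seq => l; rewrite mem_filter => /andP [li _].
  have [f2 _ fl] := Hf l.
  have hl := fl i (_ : i != l); rewrite eq_sym in hl; have {}hl := hl li.
  have p2 : 0 < v i (f l).2 by apply: v_gt0.
  apply: pow_small_mul => //.
  + by apply: divr_ge0; apply: v_ge0.
  + by rewrite ltr_pdivrMr // mul1r.
have [N [N1 HN]] := ev_ex EV.
pose num l := (f l).1 ^+ N.
pose den l := (f l).2 ^+ N.
have den0 l : den l != 0 by rewrite expf_neq0 //; case: (Hf l).
have [c [e [tau [en0 [l1 taul1] Hc Hsum]]]] := dep num den den0.
pose l0 := Order.arg_max l1 xpredT tau.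
have taumax l : tau l <= tau l0.
  rewrite /l0; case: arg_maxP => // x _ Hx; exact: Hx.
have tau0 : 0 < tau l0 by apply: lt_le_trans (taumax l1).
set i := l0.
pose T l := c l * num l * \prod_(j | j != l) den j.
pose Pall := \prod_j v i (den j).
have Pall0 : 0 < Pall.
  by rewrite /Pall; apply: prodr_gt0 => j _; apply: v_gt0.
pose r l := v i (num l) / v i (den l).
have vT l : v i (T l) = tau l * v i e * Pall * r l.
  have Pl : Pall = v i (den l) * \prod_(j | j != l) v i (den j).
    by rewrite /Pall (bigD1 l).
  rewrite /T !vM Hc v_prod Pl /r.
  have dl : 0 < v i (den l) by apply: v_gt0.
  field; exact: lt0r_neq0.
have r0 : 1 < r l0.
  rewrite /r /num /den !vX -expr_div_n exprn_egt1 -?lt0n //.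
  have [f2 f1 _] := Hf l0.
  by rewrite ltr_pdivlMr ?mul1r // v_gt0.
have rl l : l != l0 -> r l < (m%:R : R)^-1.
  move=> ll0; rewrite /r /num /den !vX -expr_div_n.
  have := HN i (mem_enum _ _) l; rewrite mulr1; apply.
  by rewrite mem_filter ll0 mem_enum.
have ve : 0 < v i e by apply: v_gt0.
set K := tau l0 * v i e * Pall.
have K0 : 0 < K by rewrite /K !mulr_gt0.
have eq1 : T l0 = - \sum_(l | l != l0) T l.
  by move: Hsum; rewrite (bigD1 l0) //= => /eqP; rewrite addr_eq0 => /eqP.
have ineq1 : K * r l0 <= \sum_(l | l != l0) K * (m%:R)^-1.
  rewrite -/K in vT; have := vT l0; rewrite -/K => <-.
  rewrite eq1 vN; apply: le_trans (v_sum _ _ _ _) _.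
  apply: ler_sum => l ll0; rewrite vT.
  have rge : 0 <= r l by rewrite /r divr_ge0 // v_ge0.
  have tl : 0 <= tau l by have := v_ge0 i (c l); rewrite Hc pmulr_lge0.
  have h : tau l * r l <= tau l0 * (m%:R)^-1.
    by apply: ler_pM => //; apply: ltW; apply: rl.
  have X0 : 0 <= v i e * Pall by apply: mulr_ge0; exact: ltW.
  have := ler_wpM2r X0 h; rewrite /K; lra.
have ineq2 : \sum_(l | l != l0) K * (m%:R : R)^-1 <= K.
  have : \sum_(l : I) K * (m%:R : R)^-1 = K.
    have -> : \sum_(l : I) K * (m%:R : R)^-1 = \sum_(l in I) K * (m%:R : R)^-1.
      by apply: eq_bigl.
    rewrite sumr_const -/m -mulr_natr; field; by rewrite pnatr_eq0 -lt0n.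
  move=> E; apply: (@le_trans _ _ (\sum_(l : I) K * (m%:R : R)^-1)); last by rewrite E.
  rewrite [X in _ <= X](bigD1 l0) //= lerDr; apply: mulr_ge0; [exact: ltW|exact: ltW].
have : K * r l0 <= K by apply: le_trans ineq2.
rewrite ger_pMr //; lra.
Qed.

End Abs.


Section HD.
Variables (K : fieldType) (P Q : {poly K}).

Definition hD (D : nat) (g : {poly K}) : {poly K} :=
  \sum_(j < D.+1) g`_j *: (P ^+ j * Q ^+ (D - j)).

Lemma hD_poly D (x : nat -> K) :
  hD D (\poly_(j < D.+1) x j) = \sum_(j < D.+1) x j *: (P ^+ j * Q ^+ (D - j)).
Proof. by apply: eq_bigr => j _; rewrite coef_poly ltn_ord. Qed.

Lemma size_sum_le (I : Type) (s : seq I) (F : I -> {poly K}) n :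
  (forall i, (size (F i) <= n)%N) -> (size (\sum_(i <- s) F i)%R <= n)%N.
Proof.
move=> H; elim/big_ind: _ => //; first by rewrite size_poly0.
move=> x y hx hy; apply: leq_trans (size_add _ _) _; by rewrite geq_max hx hy.
Qed.

Definition dg := (maxn (size P) (size Q)).-1.

Lemma size_B D j : (j <= D)%N -> (size (P ^+ j * Q ^+ (D - j))%R <= dg * D + 1)%N.
Proof.
move=> jD; apply: leq_trans (size_mul_leq _ _) _.
have h1 := size_exp_leq P j; have h2 := size_exp_leq Q (D - j).
have hP : ((size P).-1 <= dg)%N by rewrite /dg; have := leq_maxl (size P) (size Q); lia.
have hQ : ((size Q).-1 <= dg)%N by rewrite /dg; have := leq_maxr (size P) (size Q); lia.
have h3 : ((size P).-1 * j <= dg * j)%N by apply: leq_mul.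
have h4 : ((size Q).-1 * (D - j) <= dg * (D - j))%N by apply: leq_mul.
have h5 : (dg * j + dg * (D - j) = dg * D)%N by rewrite -mulnDr subnKC.
lia.
Qed.

Section Lin.
Variables (m D N : nat) (r : 'I_m -> {poly K}).

Definition Fmap (u : 'rV[K]_(m * D.+1)) : 'rV[K]_N :=
  poly_rV (\sum_l (\sum_(j < D.+1) u 0 (mxvec_index l j) *: (P ^+ j * Q ^+ (D - j))) * r l).

Lemma Fmap_semilinear : semilinear Fmap.
Proof.
split => [a u|u v]; rewrite /Fmap.
  rewrite -linearZ /=; congr poly_rV; rewrite scaler_sumr; apply: eq_bigr => l _.
  rewrite scalerAl scaler_sumr; congr (_ * _); apply: eq_bigr => j _.
  by rewrite mxE scalerA.
rewrite -linearD /=; congr poly_rV; rewrite -big_split /=; apply: eq_bigr => l _.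
rewrite -mulrDl -big_split /=; congr (_ * _); apply: eq_bigr => j _.
by rewrite mxE scalerDl.
Qed.

HB.instance Definition _ := GRing.isSemilinear.Build K 'rV[K]_(m * D.+1) 'rV[K]_N _ Fmap
  Fmap_semilinear.

Lemma Fmap_ker : (N < m * D.+1)%N -> exists u : 'rV[K]_(m * D.+1), u != 0 /\ Fmap u = 0.
Proof.
move=> NmD.
set A := lin1_mx Fmap.
have rk : (0 < \rank (kermx A))%N.
  rewrite mxrank_ker; have := rank_leq_col A; lia.
have : kermx A != 0 by rewrite -mxrank_eq0 -lt0n.
case: (boolP [exists i, row i (kermx A) != 0]) => [/existsP [i ri] _|].
  exists (row i (kermx A)); split => //.
  by rewrite -mul_rV_lin1 -row_mul mulmx_ker row0.
move=> /existsPn H /eqP []; apply/row_matrixP => i; rewrite row0.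
by have := H i; rewrite negbK => /eqP.
Qed.

End Lin.

Lemma lin_dep (m : nat) (r : 'I_m -> {poly K}) :
  (1 <= dg)%N -> (dg < m)%N ->
  exists (D : nat) (c : 'I_m -> {poly K}),
   [/\ forall l, (size (c l) <= D.+1)%N, exists l, c l != 0 &
       \sum_l hD D (c l) * r l = 0].
Proof.
move=> d1 dm.
pose E := \max_l size (r l).
have rE l : (size (r l) <= E)%N by apply: (leq_bigmax_cond (F := fun l => size (r l))).
pose N := (dg * E + E + 1)%N.
have NmD : (N < m * E.+1)%N.
  have : ((dg + 1) * E.+1 <= m * E.+1)%N by rewrite leq_mul2r addn1 dm orbT.
  rewrite /N; nia.
have [u [un0 Fu]] := Fmap_ker r NmD.
pose c l := \poly_(j < E.+1) u 0 (mxvec_index l (inord j)).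
exists E, c; split.
- by move=> l; apply: size_poly.
- have : exists a, u 0 a != 0.
    case: (boolP [exists a, u 0 a != 0]) => [/existsP //|/existsPn H].
    move/eqP: un0 => []; apply/rowP => a.
    by have := H a; rewrite negbK mxE => /eqP.
  case=> a; case/mxvec_indexP: a => l j ua; exists l.
  apply/eqP => cl0; move: ua; have := congr1 (fun p : {poly K} => p`_j) cl0.
  by rewrite /= coef_poly ltn_ord coef0 inord_val => ->; rewrite eqxx.
- move: Fu; rewrite /Fmap.
  set W := \sum_l _ => W0.
  have -> : \sum_l hD E (c l) * r l = W.
    apply: eq_bigr => l _; rewrite hD_poly; congr (_ * _).
    by apply: eq_bigr => j _; rewrite inord_val.
  have sW : (size W <= N)%N.
    apply: size_sum_le => l; apply: leq_trans (size_mul_leq _ _) _.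
    have : (size (\sum_(j < E.+1) u 0 (mxvec_index l j) *: (P ^+ j * Q ^+ (E - j)))%R
             <= dg * E + 1)%N.
      apply: size_sum_le => j; apply: leq_trans (size_scale_leq _ _) _.
      by apply: size_B; rewrite -ltnS.
    have := rE l; rewrite /N; lia.
  by rewrite -(poly_rV_K sW) W0 linear0.
Qed.


Lemma hD0 D : hD D 0 = 0.
Proof. by rewrite /hD big1 // => j _; rewrite coef0 scale0r. Qed.

Lemma hD_add D g h : hD D (g + h) = hD D g + hD D h.
Proof. by rewrite /hD -big_split; apply: eq_bigr => j _; rewrite coefD scalerDl. Qed.

Lemma hD_scale D a g : hD D (a *: g) = a *: hD D g.
Proof. by rewrite /hD scaler_sumr; apply: eq_bigr => j _; rewrite coefZ scalerA. Qed.

Lemma hD_step D (g : {poly K}) : (size g <= D.+1)%N -> hD D.+1 g = hD D g * Q.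
Proof.
move=> sg; rewrite /hD big_ord_recr /= nth_default // scale0r addr0 mulr_suml.
apply: eq_bigr => j _ /=; rewrite -scalerAl -mulrA -exprSr subSn //.
by rewrite -ltnS.
Qed.

Lemma hD_pad D e (g : {poly K}) : (size g <= D.+1)%N -> hD (D + e) g = hD D g * Q ^+ e.
Proof.
move=> sg; elim: e => [|e IH]; first by rewrite addn0 expr0 mulr1.
rewrite addnS hD_step ?IH ?exprSr ?mulrA //.
by apply: leq_trans sg _; rewrite ltnS leq_addr.
Qed.

Lemma hD_C D c : hD D c%:P = c *: Q ^+ D.
Proof.
have := @hD_pad 0 D c%:P; rewrite add0n => -> ; last first.
  by rewrite size_polyC leq_b1.
rewrite /hD big_ord_recr big_ord0 /= add0r coefC /= subnn !expr0 mulr1.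
by rewrite -scalerAl mul1r.
Qed.

Lemma hD_MX D g : hD D.+1 (g * 'X) = P * hD D g.
Proof.
rewrite /hD big_ord_recl /= coefMX /= scale0r add0r mulr_sumr.
apply: eq_bigr => j _; rewrite coefMX /= subSS exprS -mulrA scalerAr //.
Qed.

Lemma hD_mul D1 D2 (g h : {poly K}) : (size g <= D1.+1)%N -> (size h <= D2.+1)%N ->
  hD (D1 + D2) (g * h) = hD D1 g * hD D2 h.
Proof.
elim: D1 g => [|D1 IH] g sg sh.
  rewrite (size1_polyC sg) add0n mul_polyC hD_scale hD_C expr0.
  by rewrite -scalerAl mul1r.
pose g' := \poly_(i < D1.+1) g`_i.+1.
have eg : g = g' * 'X + (g`_0)%:P.
  apply/polyP => i; rewrite coefD coefMX coefC.
  case: i => [|i] /=; first by rewrite add0r.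
  rewrite addr0 coef_poly; case: ifP => // /negbT; rewrite -leqNgt => hi.
  by rewrite nth_default //; apply: leq_trans sg _.
have sg' : (size g' <= D1.+1)%N by apply: size_poly.
rewrite [in RHS]eg [in LHS]eg mulrDl mulrAC mul_polyC addSn hD_add hD_MX hD_scale.
rewrite IH // hD_add hD_MX hD_C -addSn [(D1.+1 + D2)%N]addnC hD_pad //.
rewrite -!mul_polyC; ring.
Qed.

End HD.

Section Comp.
Variables (R : realType) (k : closedFieldType) (absv : k -> R).

Lemma connectedU (C1 C2 : set (pt R k)) : connectedP1 absv C1 -> connectedP1 absv C2 ->
  C1 `&` C2 !=set0 -> connectedP1 absv (C1 `|` C2).
Proof.
move=> c1 c2 [p [p1 p2]] [U [V [[oU oV] sub [u [uC uU]] [w [wC wV]] disj]]].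
have side (C : set (pt R k)) : C `<=` C1 `|` C2 -> connectedP1 absv C ->
    C `&` U = set0 \/ C `&` V = set0.
  move=> CC cC; apply: contrapT => /not_orP [/eqP/set0P hU /eqP/set0P hV].
  apply: cC; exists U, V; split => //.
  - by move=> x /CC /sub.
  - apply/seteqP; split => // x [[xC xU] xV].
    have : ((C1 `|` C2) `&` U `&` V) x by split => //; split => //; apply: CC.
    by rewrite disj.
have s1 := side C1 (fun x h => or_introl h) c1.
have s2 := side C2 (fun x h => or_intror h) c2.
have pUV := sub p (or_introl p1).
have E1 : forall (C : set (pt R k)), C p -> C `&` U = set0 -> C `&` V = set0 -> False.
  move=> C Cp hU hV; case: pUV => h.
    by have : (C `&` U) p by []; rewrite hU.
  by have : (C `&` V) p by []; rewrite hV.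
case: s1 => [h1U|h1V]; case: s2 => [h2U|h2V].
- case: uC => h.
    by have : (C1 `&` U) u by []; rewrite h1U.
  by have : (C2 `&` U) u by []; rewrite h2U.
- case: pUV => h; first by have : (C1 `&` U) p by []; rewrite h1U.
  by have : (C2 `&` V) p by []; rewrite h2V.
- case: pUV => h; first by have : (C2 `&` U) p by []; rewrite h2U.
  by have : (C1 `&` V) p by []; rewrite h1V.
- case: wC => h.
    by have : (C1 `&` V) w by []; rewrite h1V.
  by have : (C2 `&` V) w by []; rewrite h2V.
Qed.

Lemma connected1 (y : pt R k) : connectedP1 absv [set y].
Proof.
move=> [U [V [_ _ [u [-> uU]] [w [-> wV]] disj]]].
by have : ([set y] `&` U `&` V) y by []; rewrite disj.
Qed.

Lemma component_sub A x : component absv A x `<=` A.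
Proof. by move=> y [C [CA _ _ Cy]]; apply: CA. Qed.

Lemma component_self A y : A y -> component absv A y y.
Proof. by move=> Ay; exists [set y]; split => //; [move=> z -> | exact: connected1]. Qed.

Lemma component_eq A x y : component absv A x y -> component absv A x = component absv A y.
Proof.
move=> [C [CA cC Cx Cy]]; apply/seteqP; split => z [C' [C'A cC' h1 h2]].
- exists (C `|` C'); split.
  + by move=> w [] ?; [apply: CA | apply: C'A].
  + by apply: connectedU => //; exists x.
  + by left.
  + by right.
- exists (C `|` C'); split.
  + by move=> w [] ?; [apply: CA | apply: C'A].
  + by apply: connectedU => //; exists y.
  + by left.
  + by right.
Qed.

End Comp.

Section Conc.
Variables (R : realType) (k : closedFieldType) (absv : k -> R).
Hypothesis Habs : complete_nonarch_abs absv.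

Lemma absv_ge0 x : 0 <= absv x. Proof. by case: Habs. Qed.
Lemma absv_eq0 x : absv x = 0 <-> x = 0. Proof. by case: Habs. Qed.
Lemma absvM x y : absv (x * y) = absv x * absv y. Proof. by case: Habs. Qed.
Lemma absv_max x y : absv (x + y) <= Order.max (absv x) (absv y).
Proof. by case: Habs => _ _ _ []. Qed.
Lemma absv_nontriv : exists c, absv c != 0 /\ absv c != 1.
Proof. by case: Habs => _ _ _ []. Qed.

Lemma absv0 : absv 0 = 0. Proof. by apply/absv_eq0. Qed.
Lemma absv_gt0 x : x != 0 -> 0 < absv x.
Proof.
move=> xn0; rewrite lt_def absv_ge0 andbT; apply/eqP => /absv_eq0 /eqP.
by apply/negP.
Qed.
Lemma absv1 : absv 1 = 1.
Proof.
have h : absv 1 = absv 1 * absv 1 by rewrite -absvM mulr1.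
have p : 0 < absv 1 by apply: absv_gt0; exact: oner_neq0.
have : absv 1 * (absv 1 - 1) = 0 by rewrite mulrBr mulr1 -h subrr.
by move/eqP; rewrite mulf_eq0 subr_eq0 gt_eqF //= => /eqP.
Qed.
Lemma absv_tri x y : absv (x + y) <= absv x + absv y.
Proof.
apply: le_trans (absv_max x y) _; have := absv_ge0 x; have := absv_ge0 y.
move=> h1 h2; rewrite ge_max; apply/andP; split; lra.
Qed.
Lemma absvV x : absv x^-1 = (absv x)^-1.
Proof.
case: (eqVneq x 0) => [->|xn0]; first by rewrite invr0 absv0 invr0.
have h : absv x * absv x^-1 = 1 by rewrite -absvM mulfV // absv1.
have p := absv_gt0 xn0.
by rewrite -[LHS](mulKf (lt0r_neq0 p)) h mulr1.
Qed.
Lemma absvN1 : absv (-1) = 1.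
Proof.
have h : absv (-1) * absv (-1) = 1 by rewrite -absvM mulrNN mulr1 absv1.
have p := absv_ge0 (-1).
have : (absv (-1) - 1) * (absv (-1) + 1) = 0 by rewrite mulrDr !mulrBl h; lra.
move/eqP; rewrite mulf_eq0 => /orP [|]; rewrite ?subr_eq0 => /eqP //; lra.
Qed.
Lemma absvN x : absv (- x) = absv x.
Proof. by rewrite -mulN1r absvM absvN1 mul1r. Qed.
Lemma absvX x n : absv (x ^+ n) = absv x ^+ n.
Proof. by elim: n => [|n IH]; rewrite ?expr0 ?absv1 // !exprS absvM IH. Qed.

Section SN.
Variable s : {poly k} -> R.
Hypothesis hs : seminormA1 absv s.
Lemma sn_ge0 g : 0 <= s g. Proof. by case: hs. Qed.
Lemma snM g h : s (g * h) = s g * s h. Proof. by case: hs. Qed.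
Lemma snD g h : s (g + h) <= s g + s h. Proof. by case: hs. Qed.
Lemma snC c : s c%:P = absv c. Proof. by case: hs. Qed.
Lemma sn0 : s 0 = 0. Proof. by rewrite -[0]/(0%:P) snC absv0. Qed.
Lemma sn1 : s 1 = 1. Proof. by rewrite -[1]/(1%:P) snC absv1. Qed.
Lemma snX g n : s (g ^+ n) = s g ^+ n.
Proof. by elim: n => [|n IH]; rewrite ?expr0 ?sn1 // !exprS snM IH. Qed.
Lemma snZ c g : s (c *: g) = absv c * s g. Proof. by rewrite -mul_polyC snM snC. Qed.
Lemma snN g : s (- g) = s g. Proof. by rewrite -scaleN1r snZ absvN1 mul1r. Qed.
End SN.


Lemma typeI_seminorm b : seminormA1 absv (fun g : {poly k} => absv g.[b]).
Proof.
split => [g|g h|g h|c]; rewrite ?absv_ge0 ?hornerM ?absvM ?hornerC //.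
by rewrite hornerD absv_tri.
Qed.

Section Rat.
Variable f : ratfun k.
Local Notation P := (numer f).
Local Notation Q := (denom f).

Lemma homog_hD g : homog P Q g = hD P Q (size g).-1 g.
Proof.
rewrite /homog /hD; case E: (size g) => [|n] /=; last by [].
move/eqP: E; rewrite size_poly_eq0 => /eqP ->; rewrite big_ord0.
by rewrite big_ord1 coef0 scale0r.
Qed.

Definition Tf (s : {poly k} -> R) g := s (homog P Q g) / s Q ^+ (size g).-1.

Lemma ratact_Some s :
  ratact absv f (Some s) = if s Q == 0 then None else Some (Tf s).
Proof. by []. Qed.

Section TS.
Variable s : {poly k} -> R.
Hypotheses (hs : seminormA1 absv s) (sQ : s Q != 0).

Lemma Tf_hD D (g : {poly k}) : (size g <= D.+1)%N -> Tf s g = s (hD P Q D g) / s Q ^+ D.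
Proof.
move=> sg; rewrite /Tf homog_hD.
have sg' : (size g <= (size g).-1.+1)%N by rewrite leqSpred.
have E : D = ((size g).-1 + (D - (size g).-1))%N by lia.
rewrite [in RHS]E hD_pad // (snM hs) (snX hs) exprD.
have q0 : s Q ^+ (size g).-1 != 0 by rewrite expf_neq0.
have q1 : s Q ^+ (D - (size g).-1) != 0 by rewrite expf_neq0.
by field; rewrite q0 q1.
Qed.

Lemma Tf_seminorm : seminormA1 absv (Tf s).
Proof.
have sQp : 0 < s Q by rewrite lt_def sQ sn_ge0.
split.
- by move=> g; rewrite /Tf divr_ge0 ?exprn_ge0 ?sn_ge0.
- move=> g h.
  set D1 := (size g).-1; set D2 := (size h).-1.
  have sg : (size g <= D1.+1)%N by rewrite leqSpred.
  have sh : (size h <= D2.+1)%N by rewrite leqSpred.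
  have sgh : (size (g * h)%R <= (D1 + D2).+1)%N.
    apply: leq_trans (size_mul_leq _ _) _; rewrite /D1 /D2; lia.
  rewrite (Tf_hD sgh) (Tf_hD sg) (Tf_hD sh) hD_mul // (snM hs) exprD.
  have q0 : s Q ^+ D1 != 0 by rewrite expf_neq0.
  have q1 : s Q ^+ D2 != 0 by rewrite expf_neq0.
  by field; rewrite q0 q1.
- move=> g h.
  set D := maxn (size g).-1 (size h).-1.
  have sg : (size g <= D.+1)%N by rewrite /D; lia.
  have sh : (size h <= D.+1)%N by rewrite /D; lia.
  have sgh : (size (g + h)%R <= D.+1)%N.
    by apply: leq_trans (size_add _ _) _; rewrite geq_max sg sh.
  rewrite (Tf_hD sgh) (Tf_hD sg) (Tf_hD sh) hD_add -mulrDl.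
  rewrite ler_pM2r ?invr_gt0 ?exprn_gt0 //; exact: snD.
- move=> c; rewrite (@Tf_hD 0); last by rewrite size_polyC leq_b1.
  by rewrite hD_C !expr0 divr1 alg_polyC (snC hs).
Qed.
End TS.

Lemma ratact_inP1 x : inP1 absv x -> inP1 absv (ratact absv f x).
Proof.
case: x => [s|] /= hs; rewrite /ratact; case: ifP => //= /negbT sQ.
  exact: Tf_seminorm.
exact: typeI_seminorm.
Qed.

Lemma iter_inP1 n x : inP1 absv x -> inP1 absv (iter n (ratact absv f) x).
Proof. by move=> hx; elim: n => [|n IH] //=; apply: ratact_inP1. Qed.

End Rat.

End Conc.

Section Conc2.
Variables (R : realType) (k : closedFieldType) (absv : k -> R).
Hypothesis Habs : complete_nonarch_abs absv.

Definition kertriv (t : {poly k} -> R) := forall g, t g = 0 -> g = 0.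

Lemma absv_sum (I : Type) (s : seq I) (F : I -> k) :
  absv (\sum_(i <- s) F i) <= \sum_(i <- s) absv (F i).
Proof.
elim/big_rec2: _ => [|j y1 y2 _ h]; first by rewrite (absv0 Habs).
by apply: le_trans (absv_tri Habs _ _) _; rewrite lerD2l.
Qed.

Lemma exists_small : exists e, e != 0 /\ absv e < 1.
Proof.
have [c [c0 c1]] := absv_nontriv Habs.
have cn0 : c != 0 by apply: contraNneq c0 => ->; rewrite (absv0 Habs).
have cp : 0 < absv c by rewrite lt_def c0 (absv_ge0 Habs).
case: (ltgtP (absv c) 1) => [h|h|/eqP]; last by rewrite (negbTE c1).
  by exists c.
exists c^-1; split; first by rewrite invr_eq0.
by rewrite (absvV Habs) invf_lt1.
Qed.

Lemma exists_big : exists e, absv e > 1.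
Proof.
have [e [e0 e1]] := exists_small.
exists e^-1; rewrite (absvV Habs) invf_gt1 //; exact: absv_gt0.
Qed.

Lemma zeta_kertriv a c : c != 0 -> kertriv (zeta absv a (absv c)).
Proof.
move=> c0 g zg; set r := absv c; have c1 : absv c = r by [].
have r0 : 0 < r by apply: absv_gt0. apply/eqP; apply: contraT => gn0.
pose M := r + absv a.
pose E := [set absv g.[z] | z in [set z | absv (z - a) <= r]].
have ub : has_ubound E.
  exists (\sum_(i < size g) absv g`_i * M ^+ i) => _ [z zD <-].
  rewrite horner_coef; apply: le_trans (absv_sum _ _) _.
  apply: ler_sum => i _; rewrite (absvM Habs) (absvX Habs).
  apply: ler_wpM2l; first exact: (absv_ge0 Habs).
  apply: lerXn2r; rewrite ?nnegrE ?(absv_ge0 Habs) //.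
    by rewrite addr_ge0 ?(absv_ge0 Habs) // ltW.
  have := absv_tri Habs (z - a) a; rewrite subrK /M; move: zD => /= zD; lra.
have [e [e0 e1]] := exists_small.
pose zs := [seq a + c * e ^+ n | n <- iota 0 (size g)].
have : ~~ all (root g) zs.
  apply/negP => allr.
  have U : uniq zs.
    rewrite map_inj_uniq ?iota_uniq // => i j /addrI /(mulfI c0) eij.
    have ep : 0 < absv e by apply: absv_gt0.
    apply: (ieexprIn ep (negbT (lt_eqF e1))).
    by rewrite -!(absvX Habs) eij.
  by have := max_poly_roots gn0 allr U; rewrite size_map size_iota ltnn.
case/allPn => z /mapP [n _ ->] nr.
have inD : absv (a + c * e ^+ n - a) <= r.
  rewrite addrC addKr (absvM Habs) (absvX Habs) c1 ger_pMr //.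
  by apply: exprn_ile1; rewrite ?(absv_ge0 Habs) // ltW.
have pos : 0 < absv g.[a + c * e ^+ n] by apply: absv_gt0.
have inE' : E (absv g.[a + c * e ^+ n]) by exists (a + c * e ^+ n).
have := ub_le_sup ub inE'.
by rewrite -/(zeta absv a r g) zg => h; lra.
Qed.


Section Fib.
Variable f : ratfun k.
Local Notation P := (numer f).
Local Notation Q := (denom f).

Lemma fiber_desc y t : inP1 absv y -> ratact absv f y = Some t -> kertriv t ->
  exists s, [/\ y = Some s, seminormA1 absv s, s Q != 0, t = Tf f s & kertriv s].
Proof.
case: y => [s|] /= hs.
  rewrite /ratact; case: ifP => // /negbT sQ [<-] kt.
  exists s; split => // g sg; apply/eqP; apply: contraT => gn0.
  have [rs eg] := closed_field_poly_normal g.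
  have lc : lead_coef g != 0 by rewrite lead_coef_eq0.
  have : s g = absv (lead_coef g) * \prod_(z <- rs) s ('X - z%:P).
    rewrite [in LHS]eg (snZ hs); congr (_ * _).
    elim/big_rec2: _ => [|z y1 y2 _ hy]; first by rewrite (sn1 Habs hs).
    by rewrite (snM hs) hy.
  rewrite sg => /esym /eqP; rewrite mulf_eq0 => /orP [|].
    by move/eqP/(absv_eq0 Habs)/eqP; rewrite (negbTE lc).
  rewrite prodf_seq_eq0 => /hasP [z _ /eqP sz].
  have Qz : Q.[z] != 0.
    apply/negP => /eqP Qz0; move: sQ; have /factor_theorem [q ->] : root Q z by apply/eqP.
    by rewrite (snM hs) sz mulr0 eqxx.
  pose c := P.[z] / Q.[z].
  have W0 : s (P - c *: Q) = 0.
    have /factor_theorem [q ->] : root (P - c *: Q) z.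
      by rewrite /root hornerD hornerN hornerZ /c divfK // subrr.
    by rewrite (snM hs) sz mulr0.
  have : Tf f s ('X - c%:P) = 0.
    rewrite (@Tf_hD _ _ absv Habs f s hs sQ 1); last by rewrite size_XsubC.
    suff -> : hD P Q 1 ('X - c%:P) = P - c *: Q by rewrite W0 mul0r.
    rewrite /hD big_ord_recl big_ord1 /= !coefB !coefX !coefC /= sub0r subr0.
    by rewrite !expr0 expr1 mul1r mulr1 scale1r scaleNr addrC.
  by move/kt/eqP; rewrite polyXsubC_eq0.
rewrite /ratact /typeI; case: ifP => _ [] // <- kt.
have := kt ('X - (if size P == size Q then lead_coef P / lead_coef Q else 0)%:P).
by rewrite hornerXsubC subrr (absv0 Habs) => /(_ erefl) /eqP; rewrite polyXsubC_eq0.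
Qed.

End Fib.

Lemma between (al be : R) : 0 < be -> be < al ->
  exists n (lam : k), [/\ lam != 0, be ^+ n < absv lam & absv lam < al ^+ n].
Proof.
move=> b0 ba.
have [c c1] := exists_big.
have a0 : 0 < al by apply: lt_trans ba.
have cn0 : c != 0 by apply: contraTneq c1 => ->; rewrite (absv0 Habs) ltr10.
set q := absv c.
have ab1 : 1 < al / be by rewrite ltr_pdivlMr // mul1r.
have [n Hn] := ev_ex (pow_big q ab1).
exists n.
set B := be ^+ n; set A := al ^+ n.
have B0 : 0 < B by rewrite exprn_gt0.
have qBA : q * B < A.
  by move: Hn; rewrite expr_div_n ltr_pdivlMr // -/A -/B.
have q0 : 0 < q by apply: lt_trans (ltr01) _; exact: c1.
case: (leP 1 B) => B1.
- have exP : exists m, B < q ^+ m.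
    by have [N HN] := pow_big B c1; exists N; apply: HN.
  case: (ex_minnP exP) => m0 Bm0 minm.
  have m00 : m0 != 0%N by apply: contraTneq Bm0 => ->; rewrite expr0 -leNgt.
  have hm : q ^+ m0.-1 <= B.
    rewrite leNgt; apply/negP => h; have := minm _ h; case: m0 m00 {Bm0 minm h} => //= m _.
    by rewrite ltnn.
  exists (c ^+ m0); split; rewrite ?expf_neq0 // (absvX Habs) //.
  rewrite -(prednK (_ : (0 < m0)%N)) ?lt0n // exprS.
  have := ler_wpM2l (ltW q0) hm; rewrite -/q; lra.
- have qi : q^-1 < 1 by rewrite invf_lt1.
  have qi0 : 0 <= q^-1 by rewrite invr_ge0 ltW.
  have exP : exists m, q^-1 ^+ m <= B.
    by have [N HN] := pow_small qi0 qi B0; exists N; apply/ltW/HN.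
  case: (ex_minnP exP) => m0 Bm0 minm.
  have m00 : m0 != 0%N by apply: contraTneq Bm0 => ->; rewrite expr0 -ltNge.
  have hm : B < q^-1 ^+ m0.-1.
    rewrite ltNge; apply/negP => h; have := minm _ h; case: m0 m00 {Bm0 minm h} => //= m _.
    by rewrite ltnn.
  exists (c^-1 ^+ m0.-1); split; rewrite ?expf_neq0 ?invr_eq0 // (absvX Habs) (absvV Habs) //.
  have e : q^-1 ^+ m0.-1 = q * q^-1 ^+ m0.
    by rewrite -(prednK (_ : (0 < m0)%N)) ?lt0n //= exprS mulrA mulfV ?mul1r // gt_eqF.
  rewrite e; have := ler_wpM2l (ltW q0) Bm0; lra.
Qed.

Lemma separate (s1 s2 : {poly k} -> R) : seminormA1 absv s1 -> seminormA1 absv s2 ->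
  kertriv s1 -> kertriv s2 -> s1 != s2 ->
  exists a b, [/\ b != 0, s1 b < s1 a & s2 a < s2 b].
Proof.
move=> h1 h2 k1 k2 ne.
have [g sg] : exists g, s1 g != s2 g.
  apply: contraNP ne => /forallNP H; apply/eqP/funext => g.
  by have /negP := H g; rewrite negbK => /eqP.
have gn0 : g != 0 by apply: contraNneq sg => ->; rewrite (sn0 Habs h1) (sn0 Habs h2).
have p1 : 0 < s1 g by rewrite lt_def (sn_ge0 h1) andbT; apply/eqP => /k1 /eqP; apply/negP.
have p2 : 0 < s2 g by rewrite lt_def (sn_ge0 h2) andbT; apply/eqP => /k2 /eqP; apply/negP.
case: (ltgtP (s1 g) (s2 g)) sg => // lt _.
- have [n [lam [l0 hb ha]]] := between p1 lt.
  exists lam%:P, (g ^+ n); split; first by rewrite expf_neq0.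
  + by rewrite (snX Habs h1) (snC h1).
  + by rewrite (snX Habs h2) (snC h2).
- have [n [lam [l0 hb ha]]] := between p2 lt.
  exists (g ^+ n), lam%:P; split; first by rewrite polyC_eq0.
  + by rewrite (snX Habs h1) (snC h1).
  + by rewrite (snX Habs h2) (snC h2).
Qed.

End Conc2.

Section Final.
Variables (R : realType) (k : closedFieldType) (absv : k -> R).
Hypothesis Habs : complete_nonarch_abs absv.
Variable f : ratfun k.
Hypothesis Hdeg : (2 <= ratdeg f)%N.
Local Notation P := (numer f).
Local Notation Q := (denom f).

Lemma fiber_finite t : kertriv t ->
  finite_set [set y : pt R k | inP1 absv y /\ ratact absv f y = Some t].
Proof.
move=> kt; apply: contrapT => inf.
set m := (ratdeg f).+1.
have [B BF cardB] := infinite_set_fset m inf.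
pose y (l : 'I_m) := nth None (B : seq (pt R k)) l.
have yl l : inP1 absv (y l) /\ ratact absv f (y l) = Some t.
  apply: BF; rewrite /= /y; apply: mem_nth; exact: leq_trans (ltn_ord _) cardB.
have H l : exists s, [/\ y l = Some s, seminormA1 absv s, s Q != 0, t = Tf f s & kertriv s].
  by case: (yl l) => h1 h2; apply: (fiber_desc Habs h1 h2 kt).
have [sf Hsf] := choice H.
have yinj l l' : y l = y l' -> l = l'.
  move=> E; apply/val_inj/eqP; rewrite -(nth_uniq None _ _ (fset_uniq B)).
  - by apply/eqP; exact: E.
  - exact: leq_trans (ltn_ord _) cardB.
  - exact: leq_trans (ltn_ord _) cardB.
have sn l : seminormA1 absv (sf l) by case: (Hsf l).
have tnn g : 0 <= t g.
  have [_ h _ -> _] := Hsf ord0.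
  by rewrite /Tf divr_ge0 ?exprn_ge0 ?(sn_ge0 h).
apply: (@indep_contra R _ _ sf).
- by move=> i x; apply: sn_ge0.
- by move=> i x z; apply: snM.
- by move=> i x z; apply: snD.
- by move=> i; apply: (sn0 Habs).
- by move=> i x; case: (Hsf i) => _ _ _ _; apply.
- move=> i j ij.
  have [yi si _ _ ki] := Hsf i; have [yj sj _ _ kj] := Hsf j.
  have ne : sf i != sf j.
    apply/negP => /eqP E; move/negP: ij; apply; apply/eqP; apply: yinj.
    by rewrite yi yj E.
  have [a [b [b0 h1 h2]]] := separate Habs si sj ki kj ne.
  by exists a, b; split.
- have m1 : (1 < m)%N by rewrite /m ltnS; lia.
  by exists ord0, (Ordinal m1).
- move=> num den den0.
  pose r l := num l * \prod_(j | j != l) den j.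
  have d1 : (0 < dg P Q)%N by apply: leq_trans _ Hdeg.
  have [D [c' [sc [l0 cl0] Hs]]] := lin_dep r d1 (ltnSn _).
  exists (fun l => hD P Q D (c' l)), (Q ^+ D), (fun l => t (c' l)); split.
  + by rewrite expf_neq0 // denom_neq0.
  + exists l0; rewrite lt_def tnn andbT; apply/eqP => /kt /eqP; apply/negP.
    exact: cl0.
  + move=> i l; have [_ h sQ -> _] := Hsf i.
    rewrite (Tf_hD Habs h sQ (sc l)) (snX Habs h).
    by rewrite divfK // expf_neq0.
  + by rewrite -[RHS]Hs; apply: eq_bigr => l _; rewrite -mulrA.
Qed.


Lemma countableU (T : Type) (X Y : set T) : countable X -> countable Y -> countable (X `|` Y).
Proof.
move=> cX cY.
have -> : X `|` Y = \bigcup_(b in [set: bool]) (if b then X else Y).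
  apply/seteqP; split => z.
    by case=> h; [exists true | exists false].
  by case=> -[] _ h; [left | right].
by apply: bigcup_countable => // -[].
Qed.

Theorem main (G : set (pt R k)) (HG : vertex_set absv G) : countable (Jset absv f G).
Proof.
case: HG => Gfin Gne Gtype.
set A := [set y | inP1 absv y /\ ~ G y].
pose S n := [set y : pt R k | inP1 absv y /\ G (iter n (ratact absv f) y)].
pose good (y : pt R k) := exists t, y = Some t /\ kertriv t.
have HS : forall n, countable (S n) /\ S n `<=` good.
  elim => [|n [cS gS]].
    split.
      apply: sub_countable (finite_set_countable Gfin).
      by apply: subset_card_le => y [_ Gy].
    move=> y [_ Gy]; have [a [c [c0 ->]]] := Gtype y Gy.
    by exists (zeta absv a (absv c)); split => //; apply: zeta_kertriv.
  have sub : S n.+1 `<=` \bigcup_(x in S n) [set y | inP1 absv y /\ ratact absv f y = x].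
    move=> y [iy Gy]; exists (ratact absv f y) => //; split.
      exact: ratact_inP1.
    by rewrite /= -iterSr.
  split.
    apply: sub_countable (subset_card_le sub) _.
    apply: bigcup_countable => // x Sx; have [t [-> kt]] := gS x Sx.
    exact: finite_set_countable (fiber_finite kt).
  move=> y Sy; have [x Sx [iy ey]] := sub y Sy; have [t [ex kt]] := gS x Sx.
  rewrite ex in ey; have [s [-> _ _ _ ks]] := fiber_desc Habs iy ey kt.
  by exists s.
have cS : countable (\bigcup_(n in [set: nat]) S n.+1).
  by apply: bigcup_countable => // n _; case: (HS n.+1).
have sub : Jset absv f G `<=`
   (component absv A) @` (\bigcup_(n in [set: nat]) S n.+1) `|` (fun g => [set g]) @` G.
  move=> U [[[x [ix nGx EU]] nF]|[g [Gg ->]]]; last by right; exists g.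
  left.
  have [n [y [n0 Uy Gy]]] : exists n y, [/\ (0 < n)%N, U y & G (iter n (ratact absv f) y)].
    apply: contrapT => H; apply: nF; split; first by exists x.
    by move=> n n0 y Uy Gy; apply: H; exists n, y.
  have Ay : A y by rewrite EU in Uy; exact: component_sub Uy.
  case: n n0 Gy => // n _ Gy.
  exists y; first by exists n => //; split => //; case: Ay.
  by rewrite EU in Uy *; rewrite (component_eq Uy).
apply: sub_countable (subset_card_le sub) _.
apply: countableU; apply: sub_countable (card_image_le _ _) _ => //.
exact: finite_set_countable.
Qed.

End Final.

End Helpers.
Unset Implicit Arguments. Set Strict Implicit. Set Printing Implicit Defensive.

Theorem lemma2p4 (R : realType) (k : closedFieldType) (absv : k -> R)
  (Habs : complete_nonarch_abs absv)
  (f : ratfun k) (Hdeg : (2 <= ratdeg f)%N)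
  (G : set (pt R k)) (HG : vertex_set absv G) :
  countable (Jset absv f G).
Proof. exact: (@Helpers.main R k absv Habs f Hdeg G HG). Qed.
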